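(* Let $m,n,r$ be positive integers with $\gcd(m,n)=\gcd(m,r-1)=1$, $r^n\equiv 1 \pmod m$, and $m=p_1^{\alpha_1}p_2^{\alpha_2}\cdots p_k^{\alpha_k}$ with $k\ge 1$, $p_1,\dots,p_k$ distinct primes and $\alpha_i\ge 1$. Let $I=\{1,\dots,k\}$. For each nonempty $T\subseteq I$ let $e_T=\operatorname{lcm}_{i\in T}\operatorname{ord}_{p_i^{\alpha_i}}(r)$, where $\operatorname{ord}_{p_i^{\alpha_i}}(r)$ is the multiplicative order of $r$ modulo $p_i^{\alpha_i}$ (equivalently, $e_T$ is the least positive integer $e$ with $r^{e}\equiv 1 \pmod{p_i^{\alpha_i}}$ for all $i\in T$; it divides $n$). Then $$\psi(ZM(m,n,r))=m\,\psi(\mathbb{Z}_n)+\sum_{\emptyset\neq T\subseteq I}\ \prod_{i\in I\setminus T}p_i^{\alpha_i}\ \prod_{i\in T}\big(\psi(\mathbb{Z}_{p_i^{\alpha_i}})-p_i^{\alpha_i}\big)\ \psi\big(\langle b^{e_T}\rangle\big),$$ where $\langle b^{e_T}\rangle\cong\mathbb{Z}_{n/e_T}$ is the subgroup of $ZM(m,n,r)$ generated by $b^{e_T}$ (it is the centralizer in $\langle b\rangle$ of the subgroup of $\langle a\rangle$ of order $\prod_{i\in T}p_i^{\alpha_i}$). Here $\psi(\mathbb{Z}_{p^{\alpha}})=\frac{p^{2\alpha+1}+1}{p+1}$.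
   Context: For a finite group $G$, $\psi(G)=\sum_{x\in G} o(x)$ denotes the sum of the orders of all elements of $G$. For positive integers $m,n,r$ with $\gcd(m,n)=\gcd(m,r-1)=1$ and $r^n\equiv 1\pmod m$, the ZM-group is $ZM(m,n,r)=\langle a,b \mid a^m=b^n=1,\ b^{-1}ab=a^r\rangle$, a group of order $mn$ (these are exactly the finite groups all of whose Sylow subgroups are cyclic; $m$ is necessarily odd). *)

(* Defs.v *)
From mathcomp Require Import all_boot all_fingroup all_algebra all_solvable.
Set Implicit Arguments. Unset Strict Implicit. Unset Printing Implicit Defensive.

Definition psi (gT : finGroupType) (G : {set gT}) : nat := \sum_(x in G) #[x]%g.

(* The search is over 1 <= e <= q, which always suffices when coprime r q
   (the order divides totient q <= q); otherwise the value is q.+1 (junk). *)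
Definition ordmod (q r : nat) : nat :=
  (find (fun e => r ^ e.+1 == 1 %[mod q]) (iota 0 q)).+1.

(* Main.v *)
Require Import Defs.
From mathcomp Require Import all_boot all_fingroup all_algebra all_solvable.
From mathcomp Require Import zify.
Set Implicit Arguments. Unset Strict Implicit. Unset Printing Implicit Defensive.

Lemma sum_surj (gT : finGroupType) (I : finType) (G : {set gT}) (f : I -> gT) (F : gT -> nat) :
  f @: setT = G -> #|I| = #|G| -> \sum_(y in G) F y = \sum_i F (f i).
Proof.
move=> fG cI.
have inj : {in setT &, injective f}.
  by apply/imset_injP; rewrite fG cardsT cI.
rewrite -fG big_imset //=; apply: eq_bigl => i; by rewrite inE.
Qed.

Definition Psi N := \sum_(i < N) N %/ gcdn N i.

Lemma psi_cycle (gT : finGroupType) (x : gT) : psi <[x]>%g = Psi #[x]%g.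
Proof.
rewrite /psi (@sum_surj _ _ _ (fun i : 'I_#[x]%g => (x ^+ i)%g)).
  by apply: eq_bigr => i _; rewrite orderXgcd.
  apply/setP=> y; apply/imsetP/idP => [[i _ ->]|/cyclePmin[i lti ->]].
    exact: mem_cycle.
  by exists (Ordinal lti).
by rewrite card_ord.
Qed.

Lemma psi_Zp N : 0 < N -> psi (Zp N) = Psi N.
Proof.
case: N => // [[|N]] _.
  by rewrite /psi /Zp /= big_set1 order1 /Psi big_ord1 gcdn0 divnn.
by rewrite /Zp /= Zp_cycle psi_cycle order_Zp1.
Qed.

Lemma gcdn_coprimeM u v y : coprime u v -> gcdn (u * v) y = gcdn u y * gcdn v y.
Proof.
move=> cuv; apply/eqP; rewrite eqn_dvd; apply/andP; split.
  have h1 : gcdn (u * v) y %| gcdn u y * v.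
    by rewrite muln_gcdl dvdn_gcd dvdn_gcdl dvdn_mulr ?dvdn_gcdr.
  have h2 : gcdn (u * v) y %| gcdn u y * y by rewrite dvdn_mull ?dvdn_gcdr.
  by rewrite muln_gcdr dvdn_gcd h1 h2.
have cg : coprime (gcdn u y) (gcdn v y).
  by apply: (coprime_dvdl (dvdn_gcdl _ _)); apply: (coprime_dvdr (dvdn_gcdl _ _)).
rewrite dvdn_gcd dvdn_mul ?dvdn_gcdl //= Gauss_dvd //.
by rewrite !dvdn_gcdr.
Qed.

Lemma divgcdM u v y : coprime u v ->
  (u * v) %/ gcdn (u * v) y = (u %/ gcdn u y) * (v %/ gcdn v y).
Proof.
move=> cuv; rewrite gcdn_coprimeM //.
have [a ha] := dvdnP (dvdn_gcdl u y); have [b hb] := dvdnP (dvdn_gcdl v y).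
case: (posnP (gcdn u y)) => [e|gu0]; first by rewrite e !(mul0n, muln0, divn0, div0n).
case: (posnP (gcdn v y)) => [e|gv0]; first by rewrite e !(mul0n, muln0, divn0, div0n).
move: (gcdn u y) (gcdn v y) gu0 gv0 ha hb => g1 g2 g10 g20 -> ->.
by rewrite mulnACA !mulnK ?muln_gt0 ?g10.
Qed.

Lemma sum_inj (I J : finType) (h : I -> J) (F : J -> nat) :
  injective h -> #|I| = #|J| -> \sum_j F j = \sum_i F (h i).
Proof.
move=> hi cIJ.
have e : h @: setT = setT.
  apply/eqP; rewrite eqEcard subsetT /= cardsT card_imset // cardsT cIJ //.
rewrite (eq_bigl (fun j => j \in h @: setT)); last by move=> j; rewrite e inE.
rewrite big_imset /=; last by move=> x y _ _; apply: hi.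
by apply: eq_bigl => i; rewrite inE.
Qed.

Lemma crt_sum u v (g1 g2 : nat -> nat) : coprime u v -> 0 < u -> 0 < v ->
  \sum_(i < u * v) g1 (i %% u) * g2 (i %% v) =
  (\sum_(i < u) g1 i) * (\sum_(i < v) g2 i).
Proof.
move=> cuv u0 v0.
rewrite big_distrlr /= pair_big /=.
pose h := fun i : 'I_(u * v) => (Ordinal (ltn_pmod i u0), Ordinal (ltn_pmod i v0)).
rewrite (@sum_inj _ _ h (fun x => g1 x.1 * g2 x.2)) //.
  move=> i j [] /eqP e1 /eqP e2; apply/val_inj/eqP => /=.
  rewrite -(modn_small (ltn_ord i)) -(modn_small (ltn_ord j)).
  by rewrite chinese_remainder // e1 e2.
by rewrite card_prod !card_ord.
Qed.

Lemma totient_leq q : totient q <= q.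
Proof.
rewrite totient_count_coprime.
rewrite big_mkord; apply: (@leq_trans (\sum_(i < q) 1)).
  by apply: leq_sum => i _; apply: leq_b1.
by rewrite sum1_card card_ord.
Qed.

Lemma ordmodP q r : 1 < q -> coprime r q -> forall j,
  (r ^ j == 1 %[mod q]) = (ordmod q r %| j).
Proof.
move=> q1 crq.
set a := fun e => r ^ e.+1 == 1 %[mod q].
have q0 : 0 < q by apply: ltnW.
have hs : has a (iota 0 q).
  apply/hasP; exists (totient q).-1.
    by rewrite mem_iota add0n (leq_trans _ (totient_leq q)) // prednK ?totient_gt0.
  by rewrite /a prednK ?totient_gt0 // Euler_exp_totient.
have fl : find a (iota 0 q) < q by move: hs; rewrite has_find size_iota.
have ho : r ^ ordmod q r == 1 %[mod q].
  have := nth_find 0 hs; rewrite nth_iota // add0n.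
have hmin : forall e, 0 < e -> e < ordmod q r -> (r ^ e == 1 %[mod q]) = false.
  move=> e e0 eo; have := @before_find _ 0 a (iota 0 q) e.-1.
  have ee : e.-1 < find a (iota 0 q) by rewrite -ltnS prednK.
  rewrite nth_iota ?add0n; last by apply: (leq_trans ee); apply: ltnW.
  by rewrite /a prednK //; apply.
move=> j.
have o0 : 0 < ordmod q r by [].
have -> : r ^ j = (r ^ (ordmod q r)) ^ (j %/ ordmod q r) * r ^ (j %% ordmod q r).
  by rewrite -expnM -expnD mulnC -divn_eq.
rewrite -modnMml -modnXm (eqP ho) modnXm exp1n modnMml mul1n.
rewrite /dvdn; case: (posnP (j %% ordmod q r)) => [->|jp].
  by rewrite expn0 eqxx.
by rewrite hmin // ?ltn_pmod // -lt0n jp.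
Qed.

Definition Phi S u := \sum_(i < u) u %/ gcdn u (i * S).

Lemma Psi_Phi N : Psi N = Phi 1 N.
Proof. by apply: eq_bigr => i _; rewrite muln1. Qed.

Lemma Phi_mul S u v : 0 < u -> 0 < v -> coprime u v -> Phi S (u * v) = Phi S u * Phi S v.
Proof.
move=> u0 v0 cuv; rewrite /Phi.
rewrite -(@crt_sum u v (fun x => u %/ gcdn u (x * S)) (fun x => v %/ gcdn v (x * S))) //.
apply: eq_bigr => i _; rewrite divgcdM //.
by rewrite -[gcdn u (i %% u * S)]gcdn_modr modnMml gcdn_modr -[gcdn v (i %% v * S)]gcdn_modr modnMml gcdn_modr.
Qed.

Lemma Phi1 S : Phi S 1 = 1.
Proof. by rewrite /Phi big_ord1 gcd1n. Qed.

Lemma Phi_cop S P : coprime P S -> Phi S P = Psi P.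
Proof. by move=> c; apply: eq_bigr => i _; rewrite Gauss_gcdl. Qed.

Lemma Phi_dvd S P : 0 < P -> P %| S -> Phi S P = P.
Proof.
move=> P0 d; rewrite /Phi (eq_bigr (fun _ => 1)) ?sum1_card ?card_ord // => i _.
by rewrite (gcdn_idPl _) ?divnn ?P0 // dvdn_mull.
Qed.

Lemma prod_mult (I : finType) (P : I -> nat) (F : nat -> nat) (A : pred I) :
  (forall u v, 0 < u -> 0 < v -> coprime u v -> F (u * v) = F u * F v) -> F 1 = 1 ->
  (forall i, 0 < P i) -> (forall i j, i != j -> coprime (P i) (P j)) ->
  F (\prod_(i | A i) P i) = \prod_(i | A i) F (P i).
Proof.
move=> Fm F1 P0 Pc.
rewrite -[\prod_(i | A i) P i]big_filter -[\prod_(i | A i) F (P i)]big_filter; have : uniq [seq i <- index_enum I | A i].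
  by rewrite filter_uniq // index_enum_uniq.
elim: [seq i <- _ | _] => [|x s IH]; first by rewrite !big_nil.
rewrite /= => /andP[xs us]; rewrite !big_cons -IH // Fm //.
- by apply: prodn_gt0 => i.
- rewrite big_seq; apply: (big_ind (fun y => coprime (P x) y)) => //; first exact: coprimen1.
  + by move=> y z cy cz; rewrite coprimeMr cy cz.
  + move=> i ii; apply: Pc; apply: contraNneq xs => ->; exact: ii.

Qed.
Local Open Scope group_scope.

Lemma conj_pow (gT : finGroupType) (a b : gT) r j :
  a ^ b = a ^+ r -> a ^ (b ^+ j) = a ^+ (r ^ j)%N.
Proof.
move=> ab; elim: j => [|j IH]; first by rewrite expg0 conjg1 expn0 expg1.
by rewrite expgSr conjgM IH conjXg ab -expgM expnS.
Qed.

Lemma pow_formula (gT : finGroupType) (a b : gT) r j i k :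
  a ^ b = a ^+ r ->
  (b ^+ j * a ^+ i) ^+ k = b ^+ (j * k) * a ^+ (i * \sum_(t < k) r ^ (j * t))%N.
Proof.
move=> ab; elim: k => [|k IH].
  by rewrite expg0 muln0 big_ord0 muln0 !expg0 mulg1.
rewrite expgS IH !mulgA -[b ^+ j * a ^+ i * b ^+ (j * k)]mulgA (conjgC (a ^+ i)).
rewrite conjXg (conj_pow _ ab) -expgM !mulgA -expgD -mulgA -expgD big_ord_recr /=.
by rewrite mulnS mulnDr [((r ^ _) * i)%N]mulnC [X in _ = _ * a ^+ X]addnC.
Qed.

Lemma order_ba (gT : finGroupType) (a b : gT) r j i :
  a ^ b = a ^+ r -> <[a]> :&: <[b]> = 1 ->
  #[b ^+ j * a ^+ i] = (#[b ^+ j] * #[a ^+ (i * \sum_(t < #[b ^+ j]) r ^ (j * t))])%N.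
Proof.
move=> ab Hab; set g := b ^+ j * a ^+ i.
have dd : #[b ^+ j] %| #[g].
  rewrite order_dvdn -expgM.
  have := expg_order g; rewrite /g (pow_formula _ _ _ ab) => e.
  set x := b ^+ (j * #[g]) in e *; set y := a ^+ _ in e.
  have xy : x = y^-1 by rewrite -[x](mulgK y) e mul1g.
  have : x \in <[a]> :&: <[b]> by rewrite inE {2}/x mem_cycle xy groupV mem_cycle.
  by rewrite Hab inE.
rewrite -(divnK dd) mulnC -orderXdiv // /g (pow_formula _ _ _ ab).
by rewrite expgM expg_order mul1g.
Qed.


Lemma zm_struct (gT : finGroupType) (a b : gT) m n r :
  0 < m -> 0 < n -> a ^+ m = 1 -> b ^+ n = 1 -> a ^ b = a ^+ r ->
  #|<<[set a; b]>>| = (m * n)%N ->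
  [/\ #[a] = m, #[b] = n, <[a]> :&: <[b]> = 1 & <<[set a; b]>> = <[b]> * <[a]>].
Proof.
move=> m0 n0 am bn ab cG.
have nab : <[b]> \subset 'N(<[a]>).
  rewrite cycle_subG; apply/normP; apply/eqP.
  by rewrite eqEcard cardJg leqnn andbT -cycleJ ab cycleX.
have GE : <<[set a; b]>> = <[a]> * <[b]>.
  rewrite -norm_joinEr //; apply/eqP; rewrite eqEsubset; apply/andP; split.
    rewrite gen_subG; apply/subsetP => x; rewrite !inE => /orP[]/eqP->.
      exact: (subsetP (joing_subl _ _)) (cycle_id a).
    exact: (subsetP (joing_subr _ _)) (cycle_id b).
  by rewrite join_subG !cycle_subG !mem_gen // !inE eqxx ?orbT.
have oam : #[a] <= m by apply: dvdn_leq => //; rewrite order_dvdn am.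
have obn : #[b] <= n by apply: dvdn_leq => //; rewrite order_dvdn bn.
have c0 := cardG_gt0 (<[a]> :&: <[b]>)%G.
have := mul_cardG <[a]> <[b]>; rewrite -GE cG -!/(order _) => e.
have oa0 := order_gt0 a; have ob0 := order_gt0 b.
have lm := leq_mul oam obn.
move: e lm; set c := #|_ :&: _| => e lm.
have e1 : c = 1%N.
  have : (m * n * c <= m * n * 1)%N by rewrite muln1 -e.
  rewrite leq_pmul2l ?muln_gt0 ?m0 // => c1.
  by apply/eqP; rewrite eqn_leq c1 c0.
rewrite e1 muln1 in e.
have ea : #[a] = m by nia.
have eb : #[b] = n by nia.
split => //; last by rewrite GE; exact: esym (normC nab).
by apply/eqP; rewrite trivg_card1 -/c e1.
Qed.
Set Implicit Arguments. Unset Strict Implicit. Unset Printing Implicit Defensive.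

Local Close Scope group_scope.

Lemma sum_mod_one x d q : x %% q = 1 %% q -> (\sum_(t < d) x ^ t) %% q = d %% q.
Proof.
move=> xq; rewrite -modn_summ.
rewrite (eq_bigr (fun _ => 1 %% q)); last by move=> t _; rewrite -modnXm xq modnXm exp1n.
by rewrite sum_nat_const card_ord modnMmr muln1.
Qed.

Lemma eq1_mod_dvd x q : 0 < x -> (x == 1 %[mod q]) = (q %| x.-1).
Proof. by move=> x0; rewrite eqn_mod_dvd // subn1. Qed.

Lemma Phi_pp p al x d : prime p -> 0 < al -> 0 < x -> coprime (p ^ al) d ->
  x ^ d == 1 %[mod p ^ al] ->
  Phi (\sum_(t < d) x ^ t) (p ^ al) = if x == 1 %[mod p ^ al] then Psi (p ^ al) else p ^ al.
Proof.
move=> pp al0 x0 cd xd.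
set S := \sum_(t < d) x ^ t.
have hd : p ^ al %| x.-1 * S by rewrite -predn_exp -eq1_mod_dvd ?expn_gt0 ?x0.
have cpd : coprime p d by rewrite -(coprime_pexpl _ _ al0).
case: ifP => x1.
  apply: Phi_cop; rewrite -coprime_modr sum_mod_one ?coprime_modr //.
  exact/eqP.
rewrite Phi_dvd ?expn_gt0 ?prime_gt0 //.
have [px|npx] := boolP (p %| x.-1).
  have : coprime (p ^ al) S.
    rewrite coprime_pexpl // -coprime_modr sum_mod_one ?coprime_modr //.
    by apply/eqP; rewrite eq1_mod_dvd.
  by move=> cS; move: hd; rewrite Gauss_dvdl // -eq1_mod_dvd // x1.
have : coprime (p ^ al) x.-1 by rewrite coprime_pexpl // prime_coprime.
by move=> cx; move: hd; rewrite Gauss_dvdr.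
Qed.

Lemma sum_mult e N (f : nat -> nat) : 0 < e ->
  \sum_(j < e * N) (if e %| j then f j else 0) = \sum_(l < N) f (e * l).
Proof.
move=> e0; elim: N => [|N IH]; first by rewrite muln0 !big_ord0.
rewrite big_ord_recr /= -IH -!(big_mkord xpredT (fun j => if e %| j then f j else 0)).
rewrite (@big_cat_nat _ _ _ (e * N)) //=; last by rewrite leq_mul2l leqnSn orbT.
congr (_ + _).
rewrite big_ltn; last by rewrite ltn_mul2l e0 ltnSn.
rewrite dvdn_mulr // big1_seq ?addn0 // => j /andP[_]; rewrite mem_iota => /andP[h1 h2].
case: ifP => // /dvdnP[q hq]; exfalso; move: h1 h2; rewrite hq; rewrite subnKC ?ltn_mul2l ?e0 ?ltnSn // mulnS => h1 h2.
have : N < q by rewrite -(ltn_pmul2l e0) [e * q]mulnC.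
move=> h3; have := leq_mul (leqnn e) h3; rewrite mulnS; nia.
Qed.

Lemma sum_dvd_order (gT : finGroupType) (b : gT) e : 0 < e -> e %| #[b]%g ->
  \sum_(j < #[b]%g) (if e %| j then #[b ^+ j]%g else 0) = psi <[b ^+ e]>%g.
Proof.
move=> e0 eb; rewrite psi_cycle orderXdiv //.
have [N hN] := dvdnP eb.
rewrite (eq_bigr (fun j : 'I_#[b]%g => if e %| j then #[b]%g %/ gcdn #[b]%g j else 0)); last first.
  by move=> j _; rewrite orderXgcd.
rewrite hN mulnK // mulnC (sum_mult N (fun i => (e * N) %/ gcdn (e * N) i)) //.
by apply: eq_bigr => l _; rewrite -muln_gcdr divnMl.
Qed.

Lemma Psi_ge N : N <= Psi N.
Proof.
case: N => // N; rewrite /Psi big_ord_recr /=.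
by rewrite (eqP (coprimeSn N)) divn1 leq_addl.
Qed.

Lemma prod_forall (I : finType) (J : {set I}) (c : I -> bool) (F : I -> nat) :
  \prod_(i in J) (if c i then F i else 0) =
  if [forall i in J, c i] then \prod_(i in J) F i else 0.
Proof.
case: ifP => h.
  by apply: eq_bigr => i iJ; move/forall_inP: h => h; rewrite h.
move/negbT: h; rewrite negb_forall_in => /exists_inP [i iJ /negbTE ci].
by rewrite (bigD1 i) //= ci mul0n.
Qed.

Lemma expand (I : finType) (c : I -> bool) (P Q : I -> nat) :
  (forall i, P i <= Q i) ->
  \prod_i (if c i then Q i else P i) =
  \sum_(T : {set I}) (if [forall i in T, c i] then
       (\prod_(i in ~: T) P i) * (\prod_(i in T) (Q i - P i)) else 0).
Proof.
move=> PQ.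
rewrite (eq_bigr (fun i => (if c i then Q i - P i else 0) + P i)); last first.
  by move=> i _; case: (c i) => //; rewrite subnK.
rewrite bigA_distr; apply: eq_bigr => T _.
rewrite (bigID (mem T)) /=.
rewrite (eq_bigr (fun i => if c i then Q i - P i else 0)); last by move=> i ->.
rewrite [X in _ * X](eq_bigr (fun i => P i)); last by move=> i; case: (i \in T).
rewrite prod_forall mulnC; case: ifP => _; last by rewrite muln0.
by congr (_ * _); apply: eq_bigl => i; rewrite inE.
Qed.

Unset Implicit Arguments.

Theorem proposition2p3
  (m n r k : nat) (p alpha : 'I_k -> nat)
  (gT : finGroupType) (a b : gT) :
  0 < m -> 0 < n -> 0 < r ->
  coprime m n -> coprime m (r - 1) -> r ^ n = 1 %[mod m] ->
  0 < k -> (forall i, prime (p i)) -> injective p -> (forall i, 0 < alpha i) ->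
  m = \prod_(i < k) p i ^ alpha i ->
  (a ^+ m = 1)%g -> (b ^+ n = 1)%g -> (a ^ b = a ^+ r)%g ->
  #|<<[set a; b]>>%g| = m * n ->
  psi <<[set a; b]>>%g =
    m * psi (Zp n)
    + \sum_(T : {set 'I_k} | T != set0)
        (\prod_(i in ~: T) p i ^ alpha i)
        * (\prod_(i in T) (psi (Zp (p i ^ alpha i)) - p i ^ alpha i))
        * psi <[b ^+ (\big[lcmn/1%N]_(i in T) ordmod (p i ^ alpha i) r)]>%g.
Proof.
move=> m0 n0 r0 cmn cmr rn k0 pp pinj al0 mE am bn ab cG.
have [oa ob Hab GE] := zm_struct m0 n0 am bn ab cG.
set P := fun i => p i ^ alpha i.
have P0 : forall i, 0 < P i by move=> i; rewrite expn_gt0 prime_gt0.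
have P1 : forall i, 1 < P i.
  by move=> i; apply: (leq_trans (prime_gt1 (pp i))); rewrite /P -{1}(expn1 (p i)) leq_exp2l ?prime_gt1 ?al0.
have Pc : forall i j, i != j -> coprime (P i) (P j).
  move=> i j ij; rewrite coprime_pexpl ?coprime_pexpr // prime_coprime //.
  by rewrite dvdn_prime2 //; apply: contra ij => /eqP/pinj ->.
have Pm : forall i, P i %| m.
  by move=> i; rewrite mE (bigD1 i) //= dvdn_mulr.
have m1 : 1 < m := leq_trans (P1 (Ordinal k0)) (dvdn_leq m0 (Pm (Ordinal k0))).
have crm : coprime r m.
  by rewrite coprime_sym -(@coprime_pexpr n) // -coprime_modr rn (modn_small m1) coprimen1.
have crP : forall i, coprime r (P i) by move=> i; apply: coprime_dvdr (Pm i) crm.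
pose f := fun x : 'I_n * 'I_m => (b ^+ x.1 * a ^+ x.2)%g.
have sumG : psi <<[set a; b]>>%g = \sum_(x : 'I_n * 'I_m) #[f x]%g.
  rewrite /psi (@sum_surj _ _ _ f) //; last by rewrite card_prod !card_ord cG mulnC.
  apply/setP => x; apply/imsetP/idP => [[[j i] _ ->]|].
    by rewrite GE mem_mulg ?mem_cycle.
  rewrite GE => /mulsgP [y z yb za ->].
  have [j jb ->] := cyclePmin yb; have [i ia ->] := cyclePmin za.
  rewrite ob in jb; rewrite oa in ia.
  by exists (Ordinal jb, Ordinal ia).
rewrite sumG /f -(pair_bigA _ (fun (j : 'I_n) (i : 'I_m) => #[b ^+ j * a ^+ i]%g)) /=.
pose e := fun T : {set 'I_k} => \big[lcmn/1%N]_(i in T) ordmod (P i) r.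
pose c := fun T : {set 'I_k} =>
  (\prod_(i in ~: T) P i) * (\prod_(i in T) (Psi (P i) - P i)).
have inner : forall j : 'I_n, \sum_(i < m) #[b ^+ j * a ^+ i]%g =
    #[b ^+ j]%g * \sum_(T : {set 'I_k}) (if e T %| j then c T else 0).
  move=> j; set d := #[b ^+ j]%g; set S := \sum_(t < d) r ^ (j * t).
  rewrite (eq_bigr (fun i : 'I_m => d * (m %/ gcdn m (i * S)))); last first.
    by move=> i _; rewrite (order_ba j i ab Hab) (orderXgcd a) oa.
  rewrite -big_distrr /=; congr (d * _).
  have hm : Phi S m = \prod_(i < k) Phi S (P i).
    rewrite mE; apply: (@prod_mult _ P (Phi S) xpredT) => //.
    - by move=> u v u0 v0 cuv; apply: Phi_mul.
    - exact: Phi1.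
  rewrite [LHS]hm.
  have dn : d %| n.
    by rewrite /d (orderXgcd b) ob; apply/dvdnP; exists (gcdn n j); rewrite mulnC divnK // dvdn_gcdl.
  have SE : S = \sum_(t < d) (r ^ j) ^ t by apply: eq_bigr => t _; rewrite expnM.
  rewrite (eq_bigr (fun i => if ordmod (P i) r %| j then Psi (P i) else P i)); last first.
    move=> i _; rewrite SE Phi_pp ?expn_gt0 ?r0 ?al0 ?(ordmodP (P1 i) (crP i)) //.
      exact: coprime_dvdl (Pm i) (coprime_dvdr dn cmn).
    rewrite -expnM /d (orderXgcd b) ob -muln_divCA_gcd expnM.
    by apply/eqP; rewrite -(modn_dvdm _ (Pm i)) -modnXm rn modnXm exp1n (modn_dvdm _ (Pm i)).
  apply: etrans (@expand _ (fun i => ordmod (P i) r %| j) (fun i => P i) (fun i => Psi (P i)) (fun i => Psi_ge (P i))) _.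
  apply: eq_bigr => T _; congr (if _ then _ else _).
  by apply/forall_inP/dvdn_biglcmP => h i iT; exact: h.
have eTn : forall T, e T %| n.
  move=> T; apply/dvdn_biglcmP => i _; rewrite -ordmodP ?P1 ?crP //.
  by apply/eqP; rewrite -(modn_dvdm _ (Pm i)) rn (modn_dvdm _ (Pm i)).
have eT0 : forall T, 0 < e T by move=> T; apply: dvdn_gt0 n0 (eTn T).
rewrite (eq_bigr (fun j : 'I_n => #[b ^+ j]%g * \sum_(T : {set 'I_k}) (if e T %| j then c T else 0))); last first.
  by move=> j _; exact: inner j.
under eq_bigr do rewrite big_distrr.
rewrite exchange_big /=.
rewrite (eq_bigr (fun T => c T * psi <[b ^+ e T]>%g)); last first.
  move=> T _.
  rewrite -(@sum_dvd_order _ b _ (eT0 T)); last by rewrite ob.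
  rewrite big_distrr /=; rewrite -ob. apply: eq_bigr => j _.
  by case: ifP => _; rewrite ?muln0 // mulnC.
rewrite (bigD1 set0) //=; congr (_ + _).
  rewrite /c /e !big_set0 muln1 setC0 expg1 psi_cycle ob psi_Zp // mE.
  by congr (_ * _); apply: eq_bigl => i; rewrite inE.
apply: eq_bigr => T _; rewrite /c; congr (_ * _ * _).
by apply: eq_bigr => i _; rewrite psi_Zp ?P0.
Qed.
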